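(* Assume Setup (S). For every $n\ge 1$ and every $(\alpha_1,\dots,\alpha_{n+1})^T\in\mathbb{C}^{n+1}$ there exists $(\beta_1,\dots,\beta_{n+1})^T\in\mathbb{C}^{n+1}$ such that $R_n(\beta_1,\dots,\beta_{n+1})=\sum_{l=1}^{n+1}\alpha_l\,\chi_{B(l,n)}$.
   Context: Setup (S): Let $\mathfrak{A}=\varinjlim(\mathfrak{A}_n,\phi_n)$ be an AF C$^*$-algebra with $\mathfrak{A}_0=\mathbb{C}$, $\mathfrak{A}_n$ having exactly $n+1$ summands, $\phi_n$ unital injective $*$-homomorphisms with multiplicity matrices $\overline{A}_{n,n+1}\in M_{n+2,n+1}(\mathbb{N})$ ($(i,j)$ entry = multiplicity of summand $j$ of $\mathfrak{A}_n$ in summand $i$ of $\mathfrak{A}_{n+1}$), each of rank $n+1$. The Bratteli diagram has vertices $v(i,n)$, $1\le i\le n+1$, and $(\overline{A}_{n,n+1})_{ij}$ edges from $v(j,n)$ to $v(i,n+1)$. A minimal reduction is a subgraph with the same vertices, obtained by deleting edges only, in which for all $n\ge 0$ each vertex at level $n+1$ receives exactly one edge from level $n$ and each vertex at level $n$ emits at least one edge to level $n+1$. Fix a minimal reduction. Then for each $n\ge 1$ there are unique $1\le r'_n<r_n\le n+1$ and $1\le a_n\le n$ such that $v(r'_n,n)$ and $v(r_n,n)$ are the two vertices joined to $v(a_n,n-1)$, every other vertex of level $n-1$ being joined to exactly one vertex of level $n$; set $r_0=1$. $X_{min}$ is the set of infinite paths $(v(i_n,n))_{n\ge0}$, $i_0=1$,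 in the minimal reduction, with the topology having as clopen basis the nonempty sets $B(i,n)=\{\text{paths with }i_n=i\}$; it is a compact metrizable totally disconnected space. Define the linear map $R_n:\mathbb{C}^{n+1}\to C(X_{min},\mathbb{C})$ by $R_n(\alpha_1,\dots,\alpha_{n+1})=\sum_{l=0}^n\alpha_{l+1}\chi_{B(r_l,l)}$. *)

(* Defs.v *)
From mathcomp Require Import all_boot all_order all_algebra.
From mathcomp Require Import reals.
From mathcomp Require Export complex.
Set Implicit Arguments. Unset Strict Implicit. Unset Printing Implicit Defensive.
Import Order.TTheory GRing.Theory Num.Theory.
Local Open Scope ring_scope.

(* Vertices are 0-indexed: v(i,n) with 1 <= i <= n+1 is the ordinal (i-1 : 'I_n.+1).
   A minimal reduction is given by the parent map
     par n : 'I_(n.+2) -> 'I_(n.+1)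
   sending a vertex at level n+1 to the unique vertex at level n it receives
   its (unique) edge from. *)

Section MinRed.
Variable par : forall n : nat, 'I_n.+2 -> 'I_n.+1.

Definition is_path (x : forall n : nat, 'I_n.+1) : Prop :=
  forall n, par (x n.+1) = x n.

Definition Xmin := { x : forall n : nat, 'I_n.+1 | is_path x }.

Definition chiB (R : realType) (i n : nat) (x : Xmin) : R[i] :=
  if (val (proj1_sig x n) == i)%N then 1 else 0.

(* r_n (0-indexed): r_0 = 0, and for n >= 1, r_n is the larger of the two
   vertices at level n that are joined to the same vertex at level n-1,
   i.e. the largest index having a sibling. *)
Definition r (n : nat) : nat :=
  match n with
  | 0 => 0%N
  | m.+1 => \max_(i : 'I_m.+2 | [exists j : 'I_m.+2, (j != i) && (par j == par i)]) val i
  end.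

Definition Rn (R : realType) (n : nat) (beta : 'I_n.+1 -> R[i]) : Xmin -> R[i] :=
  fun x => \sum_(l < n.+1) beta l * chiB R (r l) l x.

End MinRed.

(* Main.v *)
Require Import Defs.
From mathcomp Require Import all_boot all_order all_algebra.
From mathcomp Require Import reals complex.
Import Order.TTheory GRing.Theory Num.Theory.
Local Open Scope ring_scope.

Section Aux.
Variable par : forall n : nat, 'I_n.+2 -> 'I_n.+1.
Variable R : realType.
Hypothesis hemit : forall n (j : 'I_n.+1), exists i : 'I_n.+2, par n i = j.

Lemma sum_chi m (f : 'I_m.+1 -> R[i]) (x : Xmin par) :
  \sum_(i < m.+1) f i * @chiB par R i m x = f (proj1_sig x m).
Proof.
rewrite (bigD1 (proj1_sig x m)) //= big1 ?addr0.
  by rewrite /chiB eqxx mulr1.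
move=> i ne; rewrite /chiB.
case: eqP => [h|]; last by rewrite mulr0.
by exfalso; move/negP: ne; apply; apply/eqP/val_inj.
Qed.

Lemma inj_off m (c c' : 'I_m.+2) : c != c' -> par m c = par m c' ->
  {in [set~ c] &, injective (par m)}.
Proof.
move=> ncc pe; apply/imset_injP.
rewrite cardsC1 card_ord /=.
apply/eqP; apply/eqP; rewrite eqn_leq; apply/andP; split.
  by apply: leq_trans (max_card _) _; rewrite card_ord.
suff Hs : [set: 'I_m.+1] \subset par m @: [set~ c].
  by have := subset_leq_card Hs; rewrite cardsT card_ord.
apply/subsetP; move=> j _; case: (@hemit m j) => i hi.
case: (eqVneq i c) => [eic|nic].
  apply/imsetP; exists c'; first by rewrite !inE eq_sym.
  by rewrite -pe -eic hi.
by apply/imsetP; exists i; rewrite ?inE // hi.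
Qed.

Lemma sibling m : exists c c' : 'I_m.+2,
  [/\ c != c', par m c = par m c' & val c = @r par m.+1].
Proof.
pose P := fun i : 'I_m.+2 => [exists j : 'I_m.+2, (j != i) && (par m j == par m i)].
have: ~~ injectiveb (par m).
  apply/negP => /injectiveP inj.
  by have := leq_card _ inj; rewrite !card_ord ltnn.
case/injectivePn => a [b nab eab].
have hP : (0 < #|P|)%N.
  apply/card_gt0P; exists a; rewrite /P unfold_in /=.
  by apply/existsP; exists b; rewrite eq_sym nab eab eqxx.
have [c hc hm] := eq_bigmax_cond (fun i : 'I_m.+2 => val i) hP.
move: hc; rewrite /P unfold_in /= => /existsP [c' /andP [nc' /eqP pc']].
exists c, c'; split => //; first by rewrite eq_sym.
Qed.

Lemma main m (f : 'I_m.+1 -> R[i]) : exists beta : nat -> R[i],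
  forall x : Xmin par, f (proj1_sig x m) =
    \sum_(l < m.+1) beta l * @chiB par R (@r par l) l x.
Proof.
elim: m f => [|m IH] f.
  exists (fun _ => f ord0) => x; rewrite big_ord1 /chiB /=.
  case: (proj1_sig x 0) => [[|k] hk] //=; rewrite mulr1; congr f; exact: val_inj.
have [c [c' [ncc pe hr]]] := sibling m.
have inj := @inj_off m c c' ncc pe.
pose g := fun j : 'I_m.+1 => \sum_(i < m.+2 | (i != c) && (par m i == j)) f i.
have hg : forall y, g (par m y) = f (if y == c then c' else y).
  move=> y; rewrite /g.
  set t := if y == c then c' else y.
  have tc : t != c by rewrite /t; case: (eqVneq y c) => [_|//]; rewrite eq_sym.
  have pt : par m t = par m y by rewrite /t; case: (eqVneq y c) => [->|].
  rewrite (bigD1 t) /=; last by rewrite tc pt eqxx.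
  rewrite big1 ?addr0 // => i /andP [/andP [ic /eqP pi] it].
  exfalso; move/negP: it; apply; apply/eqP; apply: inj; rewrite ?inE //.
  by rewrite pi pt.
have [beta' hb] := IH g.
exists (fun l => if l == m.+1 then f c - f c' else beta' l) => x.
rewrite big_ord_recr /= eqxx.
under eq_bigr => i _ do rewrite (ltn_eqF (ltn_ord i)).
rewrite -hb.
have := proj2_sig x m; rewrite /is_path => <-.
idtac.
rewrite hg; move: hr => /= hr; rewrite -hr /chiB.
case: (eqVneq (proj1_sig x m.+1) c) => [->|ne].
  by rewrite eqxx mulr1 addrC subrK.
have -> : (val (proj1_sig x m.+1) == val c) = false.
  by apply/negbTE; apply: contra ne => /eqP h; apply/eqP/val_inj.
by rewrite mulr0 addr0.
Qed.
End Aux.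
Theorem lemma4p1
  (R : realType)
  (* multiplicity matrices of the Bratteli diagram: A n = \bar A_{n,n+1} *)
  (A : forall n : nat, 'M[nat]_(n.+2, n.+1))
  (* each has rank n+1 *)
  (hrank : forall n : nat, \rank (map_mx (fun k : nat => k%:R : rat) (A n)) = n.+1)
  (* sizes of the matrix-algebra summands: phi_n unital, A_0 = C *)
  (d : forall n : nat, 'I_n.+1 -> nat)
  (hd0 : forall i, d 0%N i = 1%N)
  (hdpos : forall n i, (0 < d n i)%N)
  (hunital : forall n (i : 'I_n.+2), d n.+1 i = (\sum_(j < n.+1) A n i j * d n j)%N)
  (* phi_n injective: every summand of A_n embeds somewhere *)
  (hinj : forall n (j : 'I_n.+1), exists i : 'I_n.+2, (0 < A n i j)%N)
  (* a minimal reduction, given by its parent maps *)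
  (par : forall n : nat, 'I_n.+2 -> 'I_n.+1)
  (hsub : forall n (i : 'I_n.+2), (0 < A n i (par n i))%N)
  (hemit : forall n (j : 'I_n.+1), exists i : 'I_n.+2, par n i = j)
  (n : nat) (hn : (1 <= n)%N) (alpha : 'I_n.+1 -> R[i]) :
  exists beta : 'I_n.+1 -> R[i],
    forall x : Xmin par,
      @Rn par R n beta x = \sum_(l < n.+1) alpha l * @chiB par R l n x.
Proof.
have [beta hb] := @main par R hemit n (fun l : 'I_n.+1 => alpha l).
exists (fun l : 'I_n.+1 => beta l) => x.
by rewrite /Rn sum_chi hb.
Qed.
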